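(* Let $(X,T)$ be a topological dynamical system and $\mathscr U$ an open cover of $X$. Let $\lambda_c$ be a symmetric probability measure on $[0,1]$ and let $c_S^n=\int_{[0,1]}x^{|S|}(1-x)^{n-|S|}\lambda_c(dx)$ for $S\subset n^*$. Define $b_n=\sum_{S\subset n^*}c_S^n\log N(\mathscr U_S)$. Then $b_{n+m}\le b_n+b_m$ for all $n,m\in\mathbb N$.
   Context: $(X,T)$: compact Hausdorff space with continuous map. $n^*=\{0,\dots,n-1\}$; $\mathscr U_S=\bigvee_{i\in S}T^{-i}\mathscr U$ (with $\mathscr U_\emptyset=\{X\}$); $N(\cdot)$ minimal cardinality of a subcover. A probability measure $\lambda$ on $[0,1]$ is symmetric if $\int f(x)\lambda(dx)=\int f(1-x)\lambda(dx)$ for all bounded measurable $f$. *)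

(* Defs.v *)
From HB Require Import structures.
From mathcomp Require Import all_boot all_order all_algebra.
From mathcomp Require Import all_classical all_reals all_analysis.
Set Implicit Arguments. Unset Strict Implicit. Unset Printing Implicit Defensive.
Import Order.TTheory GRing.Theory Num.Theory.
Local Open Scope classical_set_scope.
Local Open Scope ring_scope.

Definition coverable_by {X : Type} (V : set (set X)) (k : nat) : Prop :=
  exists F : 'I_k -> set X, (forall i, V (F i)) /\ \bigcup_i F i = setT.

(* N(V): minimal cardinality of a subcover of V (0 if no finite subcover,
   which never happens for open covers of a compact space). *)
Definition covN {X : Type} (V : set (set X)) : nat :=
  match pselect (exists k, `[< coverable_by V k >]) with
  | left h => ex_minn h
  | right _ => 0%N
  end.

(* U_S = \bigvee_{i in S} T^{-i} U, for S a subset of n^* = {0,..,n-1};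
   U_emptyset = {X}. *)
Definition joinS {X : Type} (T : X -> X) (U : set (set X)) (n : nat)
    (S : {set 'I_n}) : set (set X) :=
  [set A | exists g : 'I_n -> set X,
     (forall i, i \in S -> U (g i)) /\
     A = \bigcap_(i in [set i | i \in S]) ((iter (nat_of_ord i) T) @^-1` (g i))].

Definition cS {R : realType} (lam : probability R R) (n : nat)
    (S : {set 'I_n}) : R :=
  fine (\int[lam]_(x in `[0%R, 1%R]) ((x ^+ #|S| * (1 - x) ^+ (n - #|S|))%R)%:E)%E.

Definition bn {R : realType} {X : Type} (T : X -> X) (U : set (set X))
    (lam : probability R R) (n : nat) : R :=
  \sum_(S : {set 'I_n}) cS lam S * ln ((covN (joinS T U S))%:R).

Definition symmetric01 {R : realType} (lam : probability R R) : Prop :=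
  forall f : R -> R, measurable_fun (`[0%R, 1%R] : set R) f ->
    (exists M : R, forall x, x \in `[0%R, 1%R] -> `|f x| <= M) ->
    (\int[lam]_(x in `[0%R, 1%R]) (f x)%:E =
     \int[lam]_(x in `[0%R, 1%R]) (f (1 - x))%:E)%E.

(* Main.v *)
Require Import Defs.
From HB Require Import structures.
From mathcomp Require Import all_boot all_order all_algebra.
From mathcomp Require Import all_classical all_reals all_analysis.
Import Order.TTheory GRing.Theory Num.Theory.
Local Open Scope classical_set_scope.
Local Open Scope ring_scope.
Set Implicit Arguments. Unset Strict Implicit.

Section Weights.
Variable R : realType.

Definition pw (n : nat) (S : {set 'I_n}) (x : R) : R :=
  \prod_(i < n) (if i \in S then x else 1 - x).

Lemma pwE n (S : {set 'I_n}) x : pw S x = x ^+ #|S| * (1 - x) ^+ (n - #|S|).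
Proof.
rewrite /pw (bigID (mem S)) /=.
rewrite (eq_bigr (fun _ => x)); last by move=> i ->.
rewrite [X in _ * X](eq_bigr (fun _ => 1 - x)); last by move=> i /negbTE ->.
rewrite !prodr_const; congr (_ * _ ^+ _).
by rewrite -[n in (n - _)%N](card_ord n) -(cardC S) addKn.
Qed.

Lemma sum_pw m x : \sum_(S : {set 'I_m}) pw S x = 1.
Proof.
have -> : 1 = \prod_(i < m) \sum_(b : bool) (if b then x else 1 - x).
  rewrite big1 // => i _; rewrite big_bool /=; by rewrite addrC subrK.
rewrite bigA_distr_bigA /=.
rewrite (reindex (fun S : {set 'I_m} => [ffun i => i \in S])) /=; last first.
  exists (fun f : {ffun 'I_m -> bool} => [set i | f i]%SET) => [S _|f _].
    by apply/setP => i; rewrite inE ffunE.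
  by apply/ffunP => i; rewrite ffunE inE.
by apply: eq_bigr => S _; rewrite /pw; apply: eq_bigr => i _; rewrite ffunE.
Qed.

Lemma pw_ge0 n (S : {set 'I_n}) x : 0 <= x <= 1 -> 0 <= pw S x.
Proof.
move=> /andP[x0 x1]; rewrite /pw; apply: prodr_ge0 => i _.
by case: ifP => _ //; rewrite subr_ge0.
Qed.

Lemma pw_le1 n (S : {set 'I_n}) x : 0 <= x <= 1 -> pw S x <= 1.
Proof.
move=> /andP[x0 x1]; rewrite /pw; apply: prodr_ile1 => i _.
by case: ifP => _; rewrite ?x0 ?x1 // subr_ge0 x1 /= gerBl.
Qed.

Definition merge n m (S1 : {set 'I_n}) (S2 : {set 'I_m}) : {set 'I_(n + m)} :=
  [set k | match fintype.split k with inl i => i \in S1 | inr j => j \in S2 end]%SET.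
Definition lpart n m (S : {set 'I_(n + m)}) : {set 'I_n} :=
  [set i | lshift m i \in S]%SET.
Definition rpart n m (S : {set 'I_(n + m)}) : {set 'I_m} :=
  [set j | rshift n j \in S]%SET.

Lemma pw_merge n m (S1 : {set 'I_n}) (S2 : {set 'I_m}) x :
  pw (merge S1 S2) x = pw S1 x * pw S2 x.
Proof.
rewrite /pw big_split_ord /=; congr (_ * _); apply: eq_bigr => i _;
  rewrite inE.
- by rewrite (unsplitK (inl i)).
- by rewrite (unsplitK (inr i)).
Qed.


Lemma lpart_merge n m (S1 : {set 'I_n}) (S2 : {set 'I_m}) : lpart (merge S1 S2) = S1.
Proof. by apply/setP => i; rewrite !inE (unsplitK (inl i)). Qed.
Lemma rpart_merge n m (S1 : {set 'I_n}) (S2 : {set 'I_m}) : rpart (merge S1 S2) = S2.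
Proof. by apply/setP => i; rewrite !inE (unsplitK (inr i)). Qed.
Lemma merge_part n m (S : {set 'I_(n + m)}) : merge (lpart S) (rpart S) = S.
Proof.
apply/setP => k; rewrite inE; case: splitP => j Hk; rewrite inE;
  congr (_ \in S); apply: val_inj => //=.
Qed.

Lemma sum_merge n m (F : {set 'I_(n + m)} -> R) :
  \sum_(S : {set 'I_(n + m)}) F S =
  \sum_(S1 : {set 'I_n}) \sum_(S2 : {set 'I_m}) F (merge S1 S2).
Proof.
rewrite pair_big /=.
rewrite (reindex (fun p : {set 'I_n} * {set 'I_m} => merge p.1 p.2)) //=.
exists (fun S => (lpart S, rpart S)) => [[S1 S2] _|S _] /=.
  by rewrite lpart_merge rpart_merge.
by rewrite merge_part.
Qed.

End Weights.

Section Int.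
Variables (R : realType) (lam : probability R R).
Local Notation I01 := (`[0%R, 1%R]%classic : set R).

Lemma cSE n (S : {set 'I_n}) : cS lam S = \int[lam]_(x in `[0%R, 1%R]) pw S x.
Proof.
rewrite /cS /Rintegral; congr fine; apply: eq_integral => x _.
by rewrite pwE.
Qed.

Lemma in01 (x : R) : I01 x -> 0 <= x <= 1.
Proof. by rewrite /= in_itv. Qed.

Lemma int_bounded (f : R -> R) : measurable_fun I01 f ->
  (forall x, I01 x -> `|f x| <= 1) ->
  lam.-integrable I01 (EFin \o f).
Proof.
move=> mf bf; apply: (@measurable_bounded_integrable _ _ _ lam f I01 (measurable_itv _)) => //.
- by apply: (le_lt_trans (probability_le1 lam (measurable_itv _))); rewrite ltry.
- rewrite /bounded_near; exists 1; split => // M M1 x Hx /=.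
  exact: le_trans (bf x Hx) (ltW M1).
Qed.

Lemma pw_int n (S : {set 'I_n}) : lam.-integrable I01 (EFin \o pw S).
Proof.
apply: int_bounded.
  rewrite (_ : pw S = fun x => x ^+ #|S| * (1 - x) ^+ (n - #|S|)); last first.
    by apply/funext => x; rewrite pwE.
  apply: measurable_realfun.measurable_funM; first exact: measurable_realfun.exprn_measurable.
  apply: measurable_realfun.measurable_funX; apply: measurable_realfun.measurable_funB => //.
move=> x /in01 Hx; rewrite ger0_norm ?pw_le1 ?pw_ge0 //.
Qed.

Lemma Rint_sum (I : finType) (f : I -> R -> R) :
  (forall i, lam.-integrable I01 (EFin \o f i)) ->
  \sum_i \int[lam]_(x in `[0%R, 1%R]) f i x =
  \int[lam]_(x in `[0%R, 1%R]) (\sum_i f i x).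
Proof.
move=> fi; rewrite /Rintegral.
under eq_integral do rewrite -sumEFin.
rewrite (@integral_sum _ _ _ lam _ (measurable_itv _) _ (fun i x => (f i x)%:E) fi).
rewrite (eq_bigr (fun k => (fine (\int[lam]_(x in `[0%R, 1%R]) (f k x)%:E))%:E)%E).
  by rewrite sumEFin.
move=> i _; rewrite fineK //.
by apply: integrable_fin_num; [exact: measurable_itv | exact: fi].
Qed.

Lemma cS_ge0 n (S : {set 'I_n}) : 0 <= cS lam S.
Proof. by rewrite cSE; apply: Rintegral_ge0 => x /in01; exact: pw_ge0. Qed.

Lemma sum_cS_r n m (S1 : {set 'I_n}) :
  \sum_(S2 : {set 'I_m}) cS lam (merge S1 S2) = cS lam S1.
Proof.
under eq_bigr do rewrite cSE.
rewrite Rint_sum; last by move=> i; exact: pw_int.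
rewrite cSE; apply: eq_Rintegral => x _.
by under eq_bigr do rewrite pw_merge; rewrite -mulr_sumr sum_pw mulr1.
Qed.

Lemma sum_cS_l n m (S2 : {set 'I_m}) :
  \sum_(S1 : {set 'I_n}) cS lam (merge S1 S2) = cS lam S2.
Proof.
under eq_bigr do rewrite cSE.
rewrite Rint_sum; last by move=> i; exact: pw_int.
rewrite cSE; apply: eq_Rintegral => x _.
by under eq_bigr do rewrite pw_merge; rewrite -mulr_suml sum_pw mul1r.
Qed.

End Int.

Definition pX {X : topologicalType} (x0 : X) : Type := X.
HB.instance Definition _ (X : topologicalType) (x0 : X) := Topological.on (pX x0).
HB.instance Definition _ (X : topologicalType) (x0 : X) := isPointed.Build (pX x0) x0.

Section Cover.
Variables (X : topologicalType) (T : X -> X) (U : set (set X)).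

Lemma covN_spec (V : set (set X)) k : coverable_by V k ->
  (covN V <= k)%N /\ coverable_by V (covN V).
Proof.
move=> Vk; rewrite /covN; case: pselect => [h|h]; last first.
  by exfalso; apply: h; exists k; apply/asboolP.
case: ex_minnP => k' /asboolP Hk' Hmin; split => //.
by apply: Hmin; apply/asboolP.
Qed.

Lemma coverable_fin (I : finType) (V : set (set X)) (F : I -> set X) :
  (forall i, V (F i)) -> \bigcup_i F i = setT -> coverable_by V #|I|.
Proof.
move=> FV FT; exists (fun i : 'I_#|I| => F (enum_val i)); split => //.
apply/seteqP; split => // x _.
have : (\bigcup_i F i) x by rewrite FT.
by case=> i _ Fx; exists (enum_rank i) => //; rewrite enum_rankK.
Qed.

Lemma join_merge n m (S : {set 'I_(n + m)}) A B :
  joinS T U (lpart S) A -> joinS T U (rpart S) B ->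
  joinS T U S (A `&` (iter n T) @^-1` B).
Proof.
move=> [g1 [g1U ->]] [g2 [g2U ->]].
exists (fun k => match fintype.split k with inl i => g1 i | inr j => g2 j end).
split.
  move=> k kS; case: splitP => j Hk.
    by apply: g1U; rewrite inE (_ : lshift m j = k) //; exact: val_inj.
  by apply: g2U; rewrite inE (_ : rshift n j = k) //; exact: val_inj.
apply/seteqP; split => x /=.
  move=> [H1 H2] k /= kS; case: splitP => j Hk.
    have := H1 j; rewrite /= inE (_ : lshift m j = k); last exact: val_inj.
    by move=> /(_ kS); rewrite Hk.
  have := H2 j; rewrite /= inE (_ : rshift n j = k); last exact: val_inj.
  by move=> /(_ kS); rewrite -iterD addnC -Hk.
move=> H; split.
  move=> i /=; rewrite inE => iS; have := H _ iS.
  by rewrite (unsplitK (inl i)).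
move=> j /=; rewrite inE => jS; have := H _ jS.
by rewrite (unsplitK (inr j)) /= -iterD addnC.
Qed.

Lemma coverable_merge n m (S : {set 'I_(n + m)}) k1 k2 :
  coverable_by (joinS T U (lpart S)) k1 -> coverable_by (joinS T U (rpart S)) k2 ->
  coverable_by (joinS T U S) (k1 * k2).
Proof.
move=> [F1 [F1V F1c]] [F2 [F2V F2c]].
have := @coverable_fin ('I_k1 * 'I_k2)%type (joinS T U S)
  (fun p => F1 p.1 `&` (iter n T) @^-1` (F2 p.2)).
rewrite card_prod !card_ord; apply.
  by move=> p; apply: join_merge.
apply/seteqP; split => // x _.
have : (\bigcup_i F1 i) x by rewrite F1c.
have : (\bigcup_i F2 i) (iter n T x) by rewrite F2c.
by case=> b _ Hb [a _ Ha]; exists (a, b).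
Qed.


Lemma iter_cont (i : nat) : continuous T -> continuous (iter i T).
Proof.
move=> cT; elim: i => [|i IH] x /=; first exact: cvg_id.
exact: (continuous_comp (IH x) (cT _)).
Qed.

Lemma join_open n (S : {set 'I_n}) A : continuous T -> (forall B, U B -> open B) ->
  joinS T U S A -> open A.
Proof.
move=> cT oU [g [gU ->]].
have -> : [set i | i \in S] = [set i | (i \in enum 'I_n) && (i \in S)].
  by apply/seteqP; split => i /=; rewrite mem_enum.
rewrite bigcap_seq_cond; apply: big_ind => //; first exact: openT.
  exact: openI.
move=> i iS; apply: open_comp; last exact: (oU _ (gU i iS)).
by move=> x _; exact: iter_cont.
Qed.

Lemma join_cover n (S : {set 'I_n}) : \bigcup_(A in U) A = setT ->
  [set: X] `<=` cover (joinS T U S) id.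
Proof.
move=> UT x _.
have : forall i : 'I_n, exists B, U B /\ B (iter i T x).
  move=> i; have : (\bigcup_(A in U) A) (iter i T x) by rewrite UT.
  by case=> B UB HB; exists B.
move=> /choice [g Hg].
exists (\bigcap_(i in [set i | i \in S]) (iter i T) @^-1` (g i)).
  by exists g; split => // i _; case: (Hg i).
by move=> i _ /=; case: (Hg i).
Qed.

Lemma join_coverable n (S : {set 'I_n}) : compact [set: X] -> continuous T ->
  (forall B, U B -> open B) -> \bigcup_(A in U) A = setT ->
  exists k, coverable_by (joinS T U S) k.
Proof.
move=> cX cT oU UT.
have [x0|nX] := pselect (exists x : X, True); last first.
  exists 0%N; exists (fun i : 'I_0 => set0); split; first by case.
  apply/seteqP; split => // x _; exfalso; apply: nX; by exists x.
case: x0 => x0 _.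
have cX' : compact [set: pX x0] by exact: cX.
rewrite compact_cover in cX'.
have [D' D'sub D'cov] := cX' _ (joinS T U S) id
  (fun A HA => join_open cT oU HA) (join_cover S UT).
exists (size (finmap.enum_fset D')).
exists (fun i : 'I_(size (finmap.enum_fset D')) => nth set0 (finmap.enum_fset D') i).
split.
  move=> i; have := D'sub (nth set0 (finmap.enum_fset D') i).
  by rewrite inE; apply; apply: mem_nth.
apply/seteqP; split => // x _.
have [A AD Ax] := D'cov x I.
have Ai : (index A (finmap.enum_fset D') < size (finmap.enum_fset D'))%N.
  by rewrite index_mem.
by exists (Ordinal Ai) => //=; rewrite nth_index.
Qed.

End Cover.

Lemma ln_nat_ge0 (R : realType) (k : nat) : 0 <= ln (k%:R : R).
Proof.
case: k => [|k]; first by rewrite ln0.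
by apply: ln_ge0; rewrite ler1n.
Qed.

Lemma ln_sub (R : realType) (a b c : nat) : (a <= b * c)%N ->
  ln (a%:R : R) <= ln (b%:R : R) + ln (c%:R : R).
Proof.
move=> h; case: a h => [|a] h.
  by rewrite ln0 // addr_ge0 // ln_nat_ge0.
have b0 : (0 < b)%N by case: b h => //; rewrite mul0n.
have c0 : (0 < c)%N by case: c h => //; rewrite muln0.
rewrite -lnM ?posrE ?ltr0n // -natrM ler_ln ?posrE ?ltr0n ?ler_nat //.
by rewrite muln_gt0 b0 c0.
Qed.

Theorem theorem2p8 (R : realType) (X : topologicalType) (T : X -> X)
  (U : set (set X)) (lam : probability R R) :
  compact [set: X] -> hausdorff_space X -> continuous T ->
  (forall A, U A -> open A) -> \bigcup_(A in U) A = setT ->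
  lam `[0%R, 1%R]%classic = 1%E -> symmetric01 lam ->
  forall n m : nat, bn T U lam (n + m) <= bn T U lam n + bn T U lam m.
Proof.
move=> cX _ cT oU UT _ _ n m.
have HN : forall S : {set 'I_(n + m)},
    (covN (joinS T U S) <= covN (joinS T U (lpart S)) * covN (joinS T U (rpart S)))%N.
  move=> S.
  have [k1 H1] := join_coverable (lpart S) cX cT oU UT.
  have [k2 H2] := join_coverable (rpart S) cX cT oU UT.
  have [_ H1'] := covN_spec H1; have [_ H2'] := covN_spec H2.
  by have [] := covN_spec (coverable_merge H1' H2').
rewrite /bn.
apply: le_trans.
  apply: ler_sum => S _; apply: ler_wpM2l; first exact: cS_ge0.
  exact: (ln_sub R (HN S)).
rewrite sum_merge.
under eq_bigr do under eq_bigr do rewrite lpart_merge rpart_merge mulrDr.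
under eq_bigr do rewrite big_split /=.
rewrite big_split /=; apply: lerD; rewrite le_eqVlt; apply/orP; left; apply/eqP.
  apply: eq_bigr => S1 _; rewrite -mulr_suml sum_cS_r //.
rewrite exchange_big /=; apply: eq_bigr => S2 _.
by rewrite -mulr_suml sum_cS_l.
Qed.
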